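(* For every integer $m\ge2$ and every graph $G$, $\hom(S_{2,1^{m-2}};G)^{m}\ge \hom(S_{2,1^{m-1}};G)^{m-1}$. (For $m=2$ this is the path inequality $\hom(P_2;G)^2\ge\hom(P_3;G)$, where $P_\ell$ is the path with $\ell$ edges.)
   Context: All graphs are finite; $\hom(H;G)$ is the number of graph homomorphisms from $H$ to $G$. For $k\ge0$, $S_{2,1^k}$ is the tree with vertex set $\{1,\ldots,k+3\}$ and edge set $\{\{1,j\}:2\le j\le k+2\}\cup\{\{k+2,k+3\}\}$; note $S_{2,1^0}=P_2$ and $S_{2,1^1}=P_3$. *)

(* Defs.v *)
From mathcomp Require Import all_boot.
Set Implicit Arguments. Unset Strict Implicit. Unset Printing Implicit Defensive.

Definition simple_graph (V : finType) (e : rel V) : Prop :=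
  symmetric e /\ irreflexive e.

Definition hom (H G : finType) (eH : rel H) (eG : rel G) : nat :=
  #|[set f : {ffun H -> G} | [forall x, forall y, eH x y ==> eG (f x) (f y)]]|.

(* S_{2,1^k}: vertices {1,...,k+3} encoded as 'I_(k+3) (vertex v is ordinal
   v-1); edges {1,j} for 2<=j<=k+2 and {k+2,k+3}. *)
Definition S21_edge (k a b : nat) : bool :=
  ((a == 0) && (1 <= b <= k.+1)) || ((a == k.+1) && (b == k.+2)).

Definition S21 (k : nat) : rel 'I_(k + 3) :=
  fun i j => S21_edge k (val i) (val j) || S21_edge k (val j) (val i).
Arguments S21 k : clear implicits.

(* Main.v *)
Require Import Defs.
From mathcomp Require Import all_boot.
From mathcomp Require Import zify.

Section Proof.
Variables (V : finType) (e : rel V).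
Hypothesis Hsym : symmetric e.

Definition homset k :=
  [set f : {ffun 'I_(k+3) -> V} | [forall x, forall y, S21 k x y ==> e (f x) (f y)]].

Lemma homP k (f : {ffun 'I_(k+3) -> V}) : reflect (forall x y : 'I_(k+3), S21_edge k x y -> e (f x) (f y))
  (f \in homset k).
Proof.
rewrite inE; apply: (iffP forallP) => H.
- move=> x y Hxy; have := forallP (H x) y; rewrite /S21 Hxy => /implyP; apply => //.
- move=> x; apply/forallP => y; apply/implyP; rewrite /S21 => /orP [/H //| /H].
  by rewrite Hsym.
Qed.

Definition deg v := #|[set w | e v w]|.
Definition Delta := \max_(v : V) deg v.

Definition build k v (t : {ffun 'I_k.+1 -> V}) : {ffun 'I_(k+3) -> V} :=
  [ffun j : 'I_(k+3) => if (val j == 0) || (val j == k.+2) then v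
                        else t (inord (val j).-1)].

Lemma build_inj k v : injective (build k v).
Proof.
move=> t1 t2 H; apply/ffunP => i.
have Hi : i.+1 < k + 3 by have := ltn_ord i; lia.
have := congr1 (fun f : {ffun _ -> V} => f (Ordinal Hi)) H; rewrite !ffunE /=.
rewrite (_ : (i.+1 == k.+2) = false); last by have := ltn_ord i; lia.
by rewrite /= inord_val.
Qed.

Lemma lower k v : deg v ^ k.+1 <= #|homset k|.
Proof.
have -> : deg v ^ k.+1 = #|ffun_on_mem 'I_k.+1 (mem [set w | e v w])|.
  by rewrite card_ffun_on card_ord.
rewrite -(card_imset _ (@build_inj k v)).
apply: subset_leq_card; apply/subsetP => f /imsetP [t /ffun_onP Ht ->].
apply/homP => x y; rewrite /S21_edge.
move=> /orP [/andP [/eqP x0 /andP[y1 y2]] | /andP [/eqP xk /eqP yk]];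
  rewrite !ffunE /=; change (\val x) with (nat_of_ord x); change (\val y) with (nat_of_ord y).
- have Hy0 : (nat_of_ord y == 0) = false by lia.
  have Hy1 : (nat_of_ord y == k.+2) = false by lia.
  rewrite x0 /= Hy0 Hy1 /=.
  by have := Ht (inord (nat_of_ord y).-1); rewrite inE.
- have Hk : (k.+1 == k.+2) = false by lia.
  rewrite xk yk /= eqxx /= Hk.
  by rewrite Hsym; have := Ht (inord k); rewrite inE.
Qed.

Lemma lowerD k : Delta ^ k.+1 <= #|homset k|.
Proof.
rewrite /Delta; apply: (big_ind (fun x => x ^ k.+1 <= #|homset k|)).
- by rewrite exp0n.
- by move=> x y Hx Hy; case: (leqP x y) => H.
- by move=> v _; apply: lower.
Qed.

Definition emb k (j : 'I_(k+3)) : 'I_(k.+1+3) :=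
  @inord (k+3) (if nat_of_ord j == 0 then 0 else (nat_of_ord j).+1).

Lemma embE k j : nat_of_ord (emb k j) = if nat_of_ord j == 0 then 0 else (nat_of_ord j).+1.
Proof.
have H := ltn_ord j.
have Hlt : (if nat_of_ord j == 0 then 0 else (nat_of_ord j).+1) < (k + 3).+1.
  case: ifP => _; lia.
by rewrite /emb (inordK Hlt).
Qed.

Definition restr k (f : {ffun 'I_(k.+1+3) -> V}) : {ffun 'I_(k+3) -> V} :=
  [ffun j => f (emb k j)].

Lemma restr_hom k f : f \in homset k.+1 -> restr k f \in homset k.
Proof.
move=> Hf; apply/homP => x y Hxy; rewrite !ffunE; apply: (homP _ _ Hf).
move: Hxy; rewrite /S21_edge !embE.
case: (nat_of_ord x =P 0) => Hx; case: (nat_of_ord y =P 0) => Hy /=; lia.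
Qed.

Definition z k : 'I_(k+3) := Ordinal (ltn_addl k (isT : 0 < 3)).
Definition one k : 'I_(k.+1+3) := @inord (k+3) 1.
Lemma insubd_ord N (u0 : 'I_N) n : nat_of_ord (insubd u0 n) = if n < N then n else nat_of_ord u0.
Proof. exact: val_insubd. Qed.
Lemma one_val k : nat_of_ord (one k) = 1.
Proof. have H1 : 1 < (k+3).+1 by lia. by rewrite /one (inordK H1). Qed.

Lemma fiber k g :
  \sum_(f | (f \in homset k.+1) && (restr k f == g)) 1 <= Delta.
Proof.
rewrite sum1dep_card.
set F := [set _ | _].
have inj : {in F &, injective (fun f : {ffun 'I_(k.+1+3) -> V} => f (one k))}.
  move=> f1 f2; rewrite !inE => /andP [H1 /eqP E1] /andP [H2 /eqP E2] E.
  apply/ffunP => x.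
  case: (nat_of_ord x =P 1) => Hx.
    by rewrite (_ : x = one k) //; apply: ord_inj; rewrite Hx one_val.
  pose j := insubd (z k) (if nat_of_ord x == 0 then 0 else (nat_of_ord x).-1).
  have Ej : emb k j = x.
    apply: ord_inj; rewrite embE insubd_ord.
    have := ltn_ord x; case: (nat_of_ord x =P 0) => H0 /=.
      by move=> _; rewrite H0; case: (0 < k + 3).
    move=> Hlt; rewrite (_ : (nat_of_ord x).-1 < k + 3); last by lia.
    rewrite (_ : ((nat_of_ord x).-1 == 0) = false); last by lia.
    lia.
  have := congr1 (fun h : {ffun _ -> V} => h j) E1; have := congr1 (fun h : {ffun _ -> V} => h j) E2.
  by rewrite !ffunE Ej => -> ->.
rewrite -(card_in_imset inj).
apply: (@leq_trans (deg (g (z k)))); last by apply: leq_bigmax.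
apply: subset_leq_card; apply/subsetP => w /imsetP [f Hf' ->].
move: Hf'; rewrite !inE => /andP [Hf /eqP Eg].
have Hf2 : f \in homset k.+1 by rewrite inE.
rewrite -Eg ffunE; apply: (homP _ _ Hf2).
rewrite /S21_edge embE one_val /=; lia.
Qed.

Lemma upper k : #|homset k.+1| <= Delta * #|homset k|.
Proof.
rewrite -sum1_card (partition_big (@restr k) (mem (homset k))); last first.
  by move=> f; apply: restr_hom.
rewrite mulnC -sum_nat_const; apply: leq_sum => g _; apply: fiber.
Qed.

Lemma main k : #|homset k.+1| ^ k.+1 <= #|homset k| ^ k.+2.
Proof.
apply: (@leq_trans ((Delta * #|homset k|) ^ k.+1)).
  by rewrite leq_exp2r // upper.
rewrite expnMn [X in _ <= X]expnS; apply: leq_mul => //; exact: lowerD.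
Qed.

End Proof.

Theorem theorem3p5 (m : nat) (V : finType) (e : rel V) :
  2 <= m -> simple_graph e ->
  hom (S21 (m - 2)) e ^ m >= hom (S21 (m - 1)) e ^ (m - 1).
Proof.
case: m => [|[|k]] // _ [Hs _].
rewrite (_ : k.+2 - 2 = k); last by lia.
rewrite (_ : k.+2 - 1 = k.+1); last by lia.
exact (@main V e Hs k).
Qed.
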